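(* For any increment arrays $\underline{t}$ and $\underline{u}$ for $n$ agents, \[\bigcup_{i=1}^{n}\{C(i,\underline{t})\}\cap\bigcup_{i=1}^{n}\{C(i,\underline{u})\}\neq\varnothing\iff\underline{t}\approx\underline{u},\] and \[\bigcup_{i=1}^{n}\{C(i,\underline{t})\}=\bigcup_{i=1}^{n}\{C(i,\underline{u})\}\iff\underline{t}\approx\underline{u}.\]
   Context: Agent identifiers are $\{1,\ldots,n\}$, arithmetic on identifiers is modulo $n$ with representatives in $\{1,\ldots,n\}$ (a value $0$ is replaced by $n$). An increment array (IA) of size $s$ ($1\le s\le n$) for $n$ agents is a tuple $\underline{t}=\langle t_0,\ldots,t_{s-1}\rangle$ of non-negative integers with $\sum t_i=n-s$. Cumulative increments: $\varphi_1=0$, $\varphi_i=\sum_{k=0}^{i-2}(t_k+1)$ for $2\le i\le s+1$. The coalition generated from $x$ is $C(x,\underline{t})=\{x\}\cup\bigcup_{i=2}^{s}\{(x+\varphi_i)\bmod n\}$ (residues in $\{1,\ldots,n\}$). Two IAs are equivalent, $\underline{t}\approx\underline{u}$, if they have the same size $s$ and $\underline{u}$ is a circular shift of $\underline{t}$: there is $0\le k\le s-1$ with $\langle u_0,\ldots,u_{s-1}\rangle=\langle t_k,\ldots,t_{s-1},t_0,\ldots,t_{k-1}\rangle$. *)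

(* Defs.v *)
From mathcomp Require Import all_boot.
Set Implicit Arguments. Unset Strict Implicit. Unset Printing Implicit Defensive.

(* Agents are 1..n, represented inside 'I_n.+1 (value 0 unused). *)

Definition res (n x : nat) : nat := if x %% n == 0 then n else x %% n.

Definition is_IA (n : nat) (t : seq nat) : Prop :=
  1 <= size t <= n /\ sumn t = n - size t.

Definition phi (t : seq nat) (i : nat) : nat :=
  \sum_(0 <= k < i.-1) (nth 0 t k).+1.

Definition coalition (n : nat) (t : seq nat) (x : nat) : {set 'I_n.+1} :=
  [set a : 'I_n.+1 | (val a == res n x)
      || [exists i : 'I_(size t).+1, (2 <= i) && (val a == res n (x + phi t i))]].

Definition coalitions (n : nat) (t : seq nat) : {set {set 'I_n.+1}} :=
  [set coalition n t i | i : 'I_n.+1 & 1 <= val i].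

Definition IA_equiv (t u : seq nat) : Prop :=
  size t = size u /\ exists k, k < size t /\ u = rot k t.

(* Main.v *)
Require Import Defs.
From mathcomp Require Import all_boot.
From mathcomp Require Import zify.
Set Implicit Arguments. Unset Strict Implicit.

Definition SS (l : seq nat) := sumn l + size l.

Lemma SS_cat a b : SS (a ++ b) = SS a + SS b.
Proof. rewrite /SS sumn_cat size_cat; lia. Qed.

Lemma SS_cons c l : SS (c :: l) = c.+1 + SS l.
Proof. rewrite /SS /=; lia. Qed.

Definition RS (n x : nat) (t : seq nat) (r : nat) : Prop :=
  exists2 j, j <= size t & x + SS (take j t) = r %[mod n].

Lemma RS_cat n x a b r : RS n x (a ++ b) r <-> RS n x a r \/ RS n (x + SS a) b r.
Proof.
split.
- move=> [j Hj Hr]; rewrite take_cat in Hr.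
  case: ltnP Hr => Hja Hr.
    by left; exists j => //; apply: ltnW.
  right; exists (j - size a); first by rewrite size_cat in Hj; lia.
  by rewrite -addnA -SS_cat.
- move=> [[j Hj Hr]|[j Hj Hr]].
  + exists j; first by rewrite size_cat; lia.
    rewrite take_cat; case: ltnP => H //.
    move: Hr; have -> : j = size a by lia.
    by rewrite subnn take0 cats0 take_size.
  + exists (size a + j); first by rewrite size_cat; lia.
    rewrite take_cat ltnNge leq_addr /= addKn SS_cat addnA //.
Qed.

Lemma RS_shift n x x' t r : x = x' %[mod n] -> RS n x t r -> RS n x' t r.
Proof. move=> Hx [j Hj Hr]; exists j => //; by rewrite -modnDml -Hx modnDml. Qed.

Lemma RS_r n x t r r' : r = r' %[mod n] -> RS n x t r -> RS n x t r'.
Proof. move=> Hx [j Hj Hr]; exists j => //; by rewrite Hr. Qed.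

Lemma RS_rot n x t k r : SS t = n ->
  RS n (x + SS (drop k t)) t r <-> RS n x (rot k t) r.
Proof.
move=> HS.
have Hn : SS (take k t) + SS (drop k t) = n by rewrite -SS_cat cat_take_drop.
rewrite /rot.
set d := drop k t; set a := take k t.
have -> : RS n (x + SS d) t r <-> RS n (x + SS d) (a ++ d) r by rewrite cat_take_drop.
rewrite !RS_cat.
have E: x + SS d + SS a = x %[mod n].
  by rewrite -addnA addnC (addnC (SS _)) Hn modnDl.
split.
- case=> H; first by right.
  by left; exact: RS_shift H.
- case=> H; last by left.
  by right; apply: RS_shift H; rewrite E.
Qed.

Lemma phiS t j : j <= size t -> phi t j.+1 = SS (take j t).
Proof.
rewrite /phi /=.
elim: t j => [|c t IH] [|j] //= Hj; first by rewrite big_geq.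
  by rewrite big_geq.
rewrite big_nat_recl //= IH // SS_cons //.
Qed.

Lemma res_eq n z a : 0 < a <= n -> (a == res n z) = (z == a %[mod n]).
Proof.
move=> /andP [Ha Han]; rewrite /res.
have Hn : 0 < n by lia.
case: (ltnP a n) => Han'.
  rewrite (modn_small Han'); case E: (z %% n == 0).
    move/eqP: E => ->; apply/idP/idP => /eqP; lia.
  by rewrite eq_sym.
have -> : a = n by lia.
rewrite modnn; case E: (z %% n == 0); first by rewrite eqxx.
apply/negbTE; rewrite neq_ltn ltn_pmod ?orbT //.
Qed.

Lemma res_pos n z : 0 < n -> 0 < res n z.
Proof. rewrite /res; case: eqP => //; lia. Qed.

Lemma res_le n z : 0 < n -> res n z < n.+1.
Proof. move=> Hn; rewrite /res; case: eqP => _; first exact: ltnSn.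
rewrite ltnS ltnW // ltn_pmod //. Qed.

Lemma res_mod n z : res n z = z %[mod n].
Proof. rewrite /res; case: eqP => [->|_]; by rewrite ?modnn ?modn_mod. Qed.

Lemma coal_RS n t x (a : 'I_n.+1) : 0 < n -> SS t = n ->
  a \in coalition n t x <-> 0 < val a /\ RS n x t (val a).
Proof.
move=> Hn HS.
have Hal : val a <= n by rewrite -ltnS ltn_ord.
rewrite /coalition inE; split.
- case/orP => [/eqP E | /existsP [i /andP [Hi /eqP E]]].
    split; first by rewrite E res_pos.
    exists 0 => //; rewrite take0 addn0; apply/eqP; rewrite -res_eq; first by rewrite E.
    by rewrite Hal andbT E res_pos.
  have Hpos : 0 < val a by rewrite E res_pos.
  split => //; exists i.-1.
    have := ltn_ord i; lia.
  rewrite -phiS; last by have := ltn_ord i; lia.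
  have -> : i.-1.+1 = i by lia.
  by apply/eqP; rewrite -res_eq ?Hpos ?Hal ?E.
- move=> [Hpos [j Hj Hr]].
  have Ha : 0 < val a <= n by rewrite Hpos Hal.
  case: (posnP j) => [Hj0|Hj0].
    by move: Hr; rewrite Hj0 take0 addn0 => /eqP; rewrite -res_eq // => ->.
  case: (ltnP j (size t)) => Hjs.
    apply/orP; right; apply/existsP; have Hjs' : j.+1 < (size t).+1 by [].
    exists (Ordinal Hjs').
    rewrite /= ltnS Hj0 /= phiS; last exact: ltnW.
    by rewrite res_eq //; apply/eqP.
  move: Hr; have -> : j = size t by lia.
  rewrite take_size HS modnDr => /eqP; rewrite -res_eq // => ->.
  by [].
Qed.

Definition Q (t : seq nat) (q : nat) : Prop :=
  exists2 j, j <= size t & q = SS (take j t).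

Lemma Q_cons c t q : Q (c :: t) q <-> q = 0 \/ exists2 p, Q t p & q = c.+1 + p.
Proof.
split.
- case=> [[|j] Hj ->]; first by left; rewrite take0.
  right; exists (SS (take j t)); first by exists j.
  by rewrite /= SS_cons.
- case=> [->|[p [j Hj ->] ->]]; first by exists 0; rewrite ?take0.
  by exists j.+1 => //; rewrite /= SS_cons.
Qed.

Lemma Q_inj t u : (forall q, Q t q <-> Q u q) -> t = u.
Proof.
elim: t u => [|c t IH] [|b u] // H.
- have : Q [::] b.+1 by apply/H/Q_cons; right; exists 0; [exists 0; rewrite ?take0 | lia].
  by case=> [[|j]] _ /=; rewrite /SS /=.
- have : Q [::] c.+1 by apply/H/Q_cons; right; exists 0; [exists 0; rewrite ?take0 | lia].
  by case=> [[|j]] _ /=; rewrite /SS /=.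
- have H1 : Q (b :: u) c.+1 by apply/H/Q_cons; right; exists 0; [exists 0; rewrite ?take0 | lia].
  have H2 : Q (c :: t) b.+1 by apply/H/Q_cons; right; exists 0; [exists 0; rewrite ?take0 | lia].
  have Hcb : c = b.
    move/Q_cons: H1 => [//|[p _ Hp]]; move/Q_cons: H2 => [//|[p' _ Hp']]; lia.
  subst b; congr (_ :: _); apply: IH => q; split => Hq.
  + have : Q (c :: u) (c.+1 + q) by apply/H/Q_cons; right; exists q.
    move/Q_cons => [//|[p Hp E]]; have -> : q = p by lia. done.
  + have : Q (c :: t) (c.+1 + q) by apply/H/Q_cons; right; exists q.
    move/Q_cons => [//|[p Hp E]]; have -> : q = p by lia. done.
Qed.

Lemma SS_take t j : SS (take j t) <= SS t.
Proof. by rewrite -{2}(cat_take_drop j t) SS_cat leq_addr. Qed.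

Lemma Q_sub n y t u q : 0 < n -> SS t = n -> SS u = n ->
  (forall r, RS n y t r -> RS n y u r) -> Q t q -> Q u q.
Proof.
move=> Hn Ht Hu H [j Hj Hq].
have Hqn : q <= n by rewrite Hq -Ht SS_take.
case: (ltnP q n) => Hqn'; last first.
  by exists (size u) => //; rewrite take_size; lia.
have : RS n y u (y + q) by apply: H; exists j => //; rewrite Hq.
case=> j' Hj' /eqP; rewrite eqn_modDl => /eqP E.
have Hq' : SS (take j' u) <= n by rewrite -Hu SS_take.
case: (ltnP (SS (take j' u)) n) => Hl.
  by exists j' => //; move: E; rewrite !modn_small.
have Hn' : SS (take j' u) = n by lia.
move: E; rewrite Hn' modnn (modn_small Hqn') => Hq0.
by exists 0; rewrite ?take0.
Qed.

Lemma RS_inj n y t u : 0 < n -> SS t = n -> SS u = n ->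
  (forall r, RS n y t r <-> RS n y u r) -> t = u.
Proof.
move=> Hn Ht Hu H; apply: Q_inj => q; split.
  by apply: (@Q_sub n y t u q) => // r; case: (H r).
by apply: (@Q_sub n y u t q) => // r; case: (H r).
Qed.

Lemma coal_eq_of_RS n t u x y : 0 < n -> SS t = n -> SS u = n ->
  (forall r, RS n x t r <-> RS n y u r) -> coalition n t x = coalition n u y.
Proof.
move=> Hn Ht Hu H; apply/setP => a; apply/idP/idP.
- move/coal_RS => /(_ Hn Ht) [Ha Hr]; apply/coal_RS => //; split => //; exact/H.
- move/coal_RS => /(_ Hn Hu) [Ha Hr]; apply/coal_RS => //; split => //; exact/H.
Qed.

Lemma RS_of_coal_eq n t u x y : 0 < n -> SS t = n -> SS u = n ->
  coalition n t x = coalition n u y -> forall r, RS n x t r <-> RS n y u r.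
Proof.
move=> Hn Ht Hu H r.
pose a := Ordinal (res_le r Hn).
have Ha : 0 < val a by apply: res_pos.
have Hm : val a = r %[mod n] by rewrite /= res_mod.
have Hm' : r = val a %[mod n] by rewrite Hm.
split => Hr.
- apply: (RS_r Hm).
  have : a \in coalition n t x by apply/coal_RS => //; split => //; exact: RS_r Hm' Hr.
  by rewrite H => /coal_RS => /(_ Hn Hu) [].
- apply: (RS_r Hm).
  have : a \in coalition n u y by apply/coal_RS => //; split => //; exact: RS_r Hm' Hr.
  by rewrite -H => /coal_RS => /(_ Hn Ht) [].
Qed.

Lemma SS_rot k t : SS (rot k t) = SS t.
Proof. by rewrite /rot SS_cat addnC -SS_cat cat_take_drop. Qed.

Lemma in_coalitions n t u x z : 0 < n -> SS t = n -> SS u = n ->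
  (forall r, RS n x t r <-> RS n z u r) -> coalition n t x \in coalitions n u.
Proof.
move=> Hn Ht Hu H.
apply/imsetP; exists (Ordinal (res_le z Hn)); first by rewrite inE /= res_pos.
apply: coal_eq_of_RS => // r; rewrite H /=.
have Hz : z = res n z %[mod n] by rewrite res_mod.
have Hz' : res n z = z %[mod n] by rewrite res_mod.
by split; [apply: RS_shift Hz | apply: RS_shift Hz'].
Qed.

Lemma IA_SS n t : is_IA n t -> [/\ 0 < n, SS t = n & 0 < size t].
Proof. rewrite /is_IA /SS => -[/andP [H1 H2] H3]; split; lia. Qed.

Lemma equiv_eq n t u : is_IA n t -> is_IA n u -> IA_equiv t u ->
  coalitions n t = coalitions n u.
Proof.
move=> /IA_SS [Hn Ht _] /IA_SS [_ Hu _] [_ [k [Hk ->]]].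
have Hn2 : SS (take k t) + SS (drop k t) = n by rewrite -SS_cat cat_take_drop.
apply/eqP; rewrite eqEsubset; apply/andP; split; apply/subsetP => C /imsetP [i _ ->].
- apply: (in_coalitions (z := i + SS (take k t))) => //.
    by rewrite SS_rot.
  move=> r; rewrite -RS_rot //.
  have E : i = i + SS (take k t) + SS (drop k t) %[mod n] by rewrite -addnA Hn2 modnDr.
  have E' : i + SS (take k t) + SS (drop k t) = i %[mod n] by rewrite -E.
  by split; [apply: RS_shift E | apply: RS_shift E'].
- apply: (in_coalitions (z := i + SS (drop k t))) => //.
    by rewrite SS_rot.
  move=> r; rewrite -RS_rot //.
Qed.

Lemma coal_equiv n t u x y : is_IA n t -> is_IA n u ->
  coalition n t x = coalition n u y -> IA_equiv t u.
Proof.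
move=> /IA_SS [Hn Ht Hst] /IA_SS [_ Hu _] H.
have HR := RS_of_coal_eq Hn Ht Hu H.
have : RS n x t y by apply/HR; exists 0 => //; rewrite take0 addn0.
case=> j Hj Hy.
have [k [Hk Hky]] : exists k, k < size t /\ x + SS (take k t) = y %[mod n].
  case: (ltnP j (size t)) => Hjs; first by exists j.
  exists 0; split => //; move: Hy; have -> : j = size t by lia.
  by rewrite take_size Ht modnDr take0 addn0.
have Hn2 : SS (take k t) + SS (drop k t) = n by rewrite -SS_cat cat_take_drop.
have Hrot : rot k t = u.
  apply: (@RS_inj n y) => //; first by rewrite /rot SS_cat addnC Hn2.
  move=> r; rewrite -RS_rot // -HR.
  have E : y + SS (drop k t) = x %[mod n].
    by rewrite -modnDml -Hky modnDml -addnA Hn2 modnDr.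
  have E' : x = y + SS (drop k t) %[mod n] by rewrite E.
  by split; [apply: RS_shift E | apply: RS_shift E'].
split; first by rewrite -Hrot size_rot.
by exists k.
Qed.

Theorem theorem7 (n : nat) (t u : seq nat) :
  is_IA n t -> is_IA n u ->
  ((coalitions n t :&: coalitions n u != set0) <-> IA_equiv t u) /\
  ((coalitions n t = coalitions n u) <-> IA_equiv t u).
Proof.
move=> Ht Hu.
have P3 : coalitions n t :&: coalitions n u != set0 -> IA_equiv t u.
  case/set0Pn => C; rewrite inE => /andP [/imsetP [i _ ->] /imsetP [j _ E]].
  exact: coal_equiv Ht Hu E.
have [Hn _ _] := IA_SS Hu.
have H1 : 1 < n.+1 by [].
have P2 : coalitions n t = coalitions n u -> coalitions n t :&: coalitions n u != set0.
  move=> E; rewrite E setIid; apply/set0Pn.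
  exists (coalition n u (Ordinal H1)); apply/imsetP; exists (Ordinal H1); last by [].
  by rewrite inE.
have P1 := equiv_eq Ht Hu.
have P4 : IA_equiv t u -> coalitions n t :&: coalitions n u != set0.
  by move=> H; exact: P2 (P1 H).
have P5 : coalitions n t = coalitions n u -> IA_equiv t u.
  by move=> H; exact: P3 (P2 H).
by split; split.
Qed.
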